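(* For every integer $d\ge 2$, $\mathcal Q_d$ is dense in $\mathcal C_d$.
   Context: A polynomial knot is a map $\phi:\mathbb R\to\mathbb R^3$ with real polynomial components which is a smooth embedding ($\phi$ injective and $\phi'(t)\ne0$ for all $t$). For $d\ge2$, $\mathcal A_d$ is the set of polynomial maps $t\mapsto(f(t),g(t),h(t))$ with $\deg f\le d-2$, $\deg g\le d-1$, $\deg h\le d$, topologized via the bijection with Euclidean $\mathbb R^{3d}$ sending $(f,g,h)$ to its coefficient vector $(a_0,\dots,a_{d-2},b_0,\dots,b_{d-1},c_0,\dots,c_d)$, where $f=\sum a_it^i$, $g=\sum b_it^i$, $h=\sum c_it^i$. $\mathcal C_d\subseteq\mathcal A_d$ is the subspace of maps with $\deg f=d-2$, $\deg g=d-1$, $\deg h=d$ exactly, and $\mathcal Q_d$ is the set of polynomial knots in $\mathcal C_d$. *)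

(* Defs.v *)
From Stdlib Require Import Reals List.
Import ListNotations.
Open Scope R_scope.

(* A real polynomial sum_i l_i t^i is represented by its coefficient list
   [l_0; l_1; ...] (low degree first). Evaluation by Horner's scheme. *)
Definition peval (l : list R) (t : R) : R :=
  fold_right (fun c acc => c + t * acc) 0 l.

Definition pmap (a b c : list R) (t : R) : R * R * R :=
  (peval a t, peval b t, peval c t).

Definition is_polynomial_knot (a b c : list R) : Prop :=
  (forall s t : R, pmap a b c s = pmap a b c t -> s = t) /\
  (forall t : R,
     ~ (derivable_pt_lim (peval a) t 0 /\
        derivable_pt_lim (peval b) t 0 /\
        derivable_pt_lim (peval c) t 0)).

(* Membership in A_d: coefficient vectors (a_0..a_{d-2}, b_0..b_{d-1}, c_0..c_d),
   i.e. a point of R^{3d}. *)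
Definition in_A (d : nat) (a b c : list R) : Prop :=
  length a = (d - 1)%nat /\ length b = d /\ length c = (d + 1)%nat.

Definition in_C (d : nat) (a b c : list R) : Prop :=
  in_A d a b c /\
  nth (d - 2) a 0 <> 0 /\ nth (d - 1) b 0 <> 0 /\ nth d c 0 <> 0.

Definition in_Q (d : nat) (a b c : list R) : Prop :=
  in_C d a b c /\ is_polynomial_knot a b c.

Fixpoint sqdist (l1 l2 : list R) : R :=
  match l1, l2 with
  | x :: r, y :: s => (x - y) ^ 2 + sqdist r s
  | _, _ => 0
  end.

Definition dist3 (a b c a' b' c' : list R) : R :=
  sqrt (sqdist a a' + sqdist b b' + sqdist c c').

(* Main.v *)
Require Import Defs.
From Stdlib Require Import Reals List Lra Lia ClassicalEpsilon Classical.
Import ListNotations.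
Open Scope R_scope.

Fixpoint dd (l : list R) (s t : R) : R :=
  match l with [] => 0 | c :: l' => peval l' s + t * dd l' s t end.

Lemma peval_cons c l x : peval (c :: l) x = c + x * peval l x.
Proof. reflexivity. Qed.

Lemma dd_diff l s t : dd l s t * (s - t) = peval l s - peval l t.
Proof.
  induction l as [|c l IH]; simpl; [ring|].
  rewrite Rmult_plus_distr_r, Rmult_assoc, IH. unfold peval; simpl. ring.
Qed.

Lemma dd_deriv l t : derivable_pt_lim (peval l) t (dd l t t).
Proof.
  induction l as [|c l IH].
  - simpl. change (derivable_pt_lim (fun _ => 0) t 0). apply derivable_pt_lim_const.
  - change (derivable_pt_lim (fun x => c + x * peval l x) t (dd (c :: l) t t)).
    replace (dd (c :: l) t t) with (0 + (1 * peval l t + t * dd l t t)) by (simpl; ring).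
    apply (derivable_pt_lim_plus (fun _ => c) (fun x => x * peval l x)).
    + apply derivable_pt_lim_const.
    + apply (derivable_pt_lim_mult id (peval l)); [apply derivable_pt_lim_id|exact IH].
Qed.

Lemma prod_diff x y x' y' : Rabs (x * y - x' * y') <= Rabs x * Rabs (y - y') + Rabs (x - x') * Rabs y'.
Proof.
  replace (x * y - x' * y') with (x * (y - y') + (x - x') * y') by ring.
  rewrite <- !Rabs_mult. apply Rabs_triang.
Qed.

Lemma peval_lip l n : 0 <= n -> exists B L, 0 <= B /\ 0 <= L /\
  forall s s', Rabs s <= n -> Rabs s' <= n ->
   Rabs (peval l s) <= B /\ Rabs (peval l s - peval l s') <= L * Rabs (s - s').
Proof.
  intro Hn. induction l as [|c l IH].
  - exists 0, 0. split; [lra|]. split; [lra|]. intros s s' _ _.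
    change (peval [] s) with 0. change (peval [] s') with 0.
    rewrite Rminus_0_r, Rabs_R0. pose proof (Rabs_pos (s - s')). split; nra.
  - destruct IH as (B & L & HB & HL & H).
    exists (Rabs c + n * B), (n * L + B). pose proof (Rabs_pos c). split; [nra|]. split; [nra|].
    intros s s' Hs Hs'. destruct (H s s' Hs Hs') as [H1 H2].
    destruct (H s' s' Hs' Hs') as [H3 _].
    rewrite !peval_cons. split.
    + eapply Rle_trans; [apply Rabs_triang|]. rewrite Rabs_mult.
      apply Rplus_le_compat_l. apply Rmult_le_compat; auto using Rabs_pos.
    + replace (c + s * peval l s - (c + s' * peval l s')) with (s * peval l s - s' * peval l s') by ring.
      eapply Rle_trans; [apply prod_diff|].
      assert (Rabs s * Rabs (peval l s - peval l s') <= n * (L * Rabs (s - s'))).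
      { apply Rmult_le_compat; auto using Rabs_pos. }
      assert (Rabs (s - s') * Rabs (peval l s') <= Rabs (s - s') * B).
      { apply Rmult_le_compat_l; auto using Rabs_pos. }
      nra.
Qed.

Lemma dd_lip l n : 0 <= n -> exists L, 0 <= L /\
  forall s t s' t', Rabs s <= n -> Rabs t <= n -> Rabs s' <= n -> Rabs t' <= n ->
   Rabs (dd l s t - dd l s' t') <= L * (Rabs (s - s') + Rabs (t - t')).
Proof.
  intro Hn.
  assert (exists B L, 0 <= B /\ 0 <= L /\
  forall s t s' t', Rabs s <= n -> Rabs t <= n -> Rabs s' <= n -> Rabs t' <= n ->
   Rabs (dd l s t) <= B /\
   Rabs (dd l s t - dd l s' t') <= L * (Rabs (s - s') + Rabs (t - t'))) as HH.
  2:{ destruct HH as (B & L & _ & HL & H). exists L. split; auto. intros; apply H; auto. }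
  induction l as [|c l IH].
  - exists 0, 0. repeat split; try lra; intros; simpl; rewrite ?Rminus_0_r, Rabs_R0;
    pose proof (Rabs_pos (s - s')); pose proof (Rabs_pos (t - t')); nra.
  - destruct IH as (B & L & HB & HL & H).
    destruct (peval_lip l n Hn) as (BP & LP & HBP & HLP & HP).
    exists (BP + n * B), (LP + n * L + B). split; [nra|]. split; [nra|].
    intros s t s' t' Hs Ht Hs' Ht'. simpl.
    destruct (H s t s' t' Hs Ht Hs' Ht') as [H1 H2].
    destruct (H s' t' s' t' Hs' Ht' Hs' Ht') as [H3 _].
    destruct (HP s s' Hs Hs') as [H4 H5].
    pose proof (Rabs_pos (s - s')) as P1; pose proof (Rabs_pos (t - t')) as P2.
    split.
    + eapply Rle_trans; [apply Rabs_triang|]. rewrite Rabs_mult.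
      assert (Rabs t * Rabs (dd l s t) <= n * B) by (apply Rmult_le_compat; auto using Rabs_pos).
      lra.
    + replace (peval l s + t * dd l s t - (peval l s' + t' * dd l s' t'))
        with ((peval l s - peval l s') + (t * dd l s t - t' * dd l s' t')) by ring.
      eapply Rle_trans; [apply Rabs_triang|].
      eapply Rle_trans; [apply Rplus_le_compat_l, prod_diff|].
      assert (Rabs t * Rabs (dd l s t - dd l s' t') <= n * (L * (Rabs (s - s') + Rabs (t - t')))).
      { apply Rmult_le_compat; auto using Rabs_pos. }
      assert (Rabs (t - t') * Rabs (dd l s' t') <= Rabs (t - t') * B).
      { apply Rmult_le_compat_l; auto using Rabs_pos. }
      nra.
Qed.

Lemma cell_ex (N : nat) : (1 <= N)%nat -> forall u, 0 <= u <= INR N ->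
  exists a, (a < N)%nat /\ INR a <= u <= INR a + 1.
Proof.
  induction N as [|N IH]; intros HN u Hu; [lia|].
  destruct (Nat.eq_dec N 0) as [->|HN0].
  - exists 0%nat. simpl in Hu. split; [lia|]. simpl. lra.
  - rewrite S_INR in Hu. destruct (Rle_lt_dec u (INR N)) as [Hle|Hlt].
    + destruct (IH ltac:(lia) u ltac:(lra)) as (a & Ha & Ha2). exists a. split; [lia|lra].
    + exists N. split; [lia|lra].
Qed.

Lemma INR_close i j : Rabs (INR i - INR j) < 1 -> i = j.
Proof.
  intro H. destruct (Nat.lt_trichotomy i j) as [Hl|[He|Hl]]; auto.
  - apply le_INR in Hl. rewrite S_INR in Hl. rewrite Rabs_left1 in H; lra.
  - apply le_INR in Hl. rewrite S_INR in Hl. rewrite Rabs_right in H; lra.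
Qed.

Lemma NoDup_prod {A B} (l : list A) (l' : list B) : NoDup l -> NoDup l' -> NoDup (list_prod l l').
Proof.
  induction 1 as [|a l Ha Hl IH]; intros H'; simpl; [constructor|].
  apply NoDup_app.
  - apply NoDup_map_NoDup_ForallPairs; auto. intros x y _ _ E. now inversion E.
  - now apply IH.
  - intros [x y] H1 H2. apply in_map_iff in H1. destruct H1 as (z & Ez & _).
    inversion Ez; subst. apply in_prod_iff in H2. tauto.
Qed.

Definition grid (M : nat) := list_prod (list_prod (seq 0 M) (seq 0 M)) (seq 0 M).

Lemma pigeon (M N : nat) (f : nat * nat * nat -> nat * nat) :
  (forall i j k, (i < M)%nat -> (j < M)%nat -> (k < M)%nat ->
     (fst (f (i, j, k)) < N)%nat /\ (snd (f (i, j, k)) < N)%nat) ->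
  (forall i j k i' j' k', (i < M)%nat -> (j < M)%nat -> (k < M)%nat ->
     (i' < M)%nat -> (j' < M)%nat -> (k' < M)%nat ->
     f (i, j, k) = f (i', j', k') -> i = i' /\ j = j' /\ k = k') ->
  (M * M * M <= N * N)%nat.
Proof.
  intros Hr Hi.
  assert (Hin : forall x, In x (grid M) -> match x with (i, j, k) => (i < M /\ j < M /\ k < M)%nat end).
  { intros [[i j] k] Hx. unfold grid in Hx. rewrite !in_prod_iff, !in_seq in Hx. lia. }
  assert (ND : NoDup (map f (grid M))).
  { apply NoDup_map_NoDup_ForallPairs.
    - intros [[i j] k] [[i' j'] k'] H1 H2 E.
      apply Hin in H1; apply Hin in H2.
      destruct (Hi i j k i' j' k') as (-> & -> & ->); try tauto.
    - unfold grid; repeat apply NoDup_prod; apply seq_NoDup. }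
  assert (Inc : incl (map f (grid M)) (list_prod (seq 0 N) (seq 0 N))).
  { intros y Hy. apply in_map_iff in Hy. destruct Hy as ([[i j] k] & <- & Hx).
    apply Hin in Hx. destruct (Hr i j k) as [A B]; try tauto.
    destruct (f (i, j, k)) as [a b]. simpl in *. apply in_prod; apply in_seq; lia. }
  pose proof (NoDup_incl_length ND Inc) as HL.
  rewrite length_map in HL. unfold grid in HL. rewrite !length_prod, !length_seq in HL. exact HL.
Qed.

Definition boxlip (p : R -> R -> R) (n L : R) := forall s t s' t',
  Rabs s <= n -> Rabs t <= n -> Rabs s' <= n -> Rabs t' <= n ->
  Rabs (p s t - p s' t') <= L * (Rabs (s - s') + Rabs (t - t')).

Lemma step (p1 p2 p3 : R -> R -> R) (n L : R) :
  0 < n -> 0 < L -> boxlip p1 n L -> boxlip p2 n L -> boxlip p3 n L ->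
  forall q1 q2 q3 r, 0 < r -> exists x1 x2 x3 rho, 0 < rho /\
    Rabs (x1 - q1) + rho <= r /\ Rabs (x2 - q2) + rho <= r /\ Rabs (x3 - q3) + rho <= r /\
    forall s t, Rabs s <= n -> Rabs t <= n ->
      ~ (Rabs (p1 s t - x1) <= rho /\ Rabs (p2 s t - x2) <= rho /\ Rabs (p3 s t - x3) <= rho).
Proof.
  intros Hn HL L1 L2 L3 q1 q2 q3 r Hr.
  destruct (INR_unbounded (8 * n * L / r)) as [K HK].
  assert (HK0 : 0 < INR K). { apply Rlt_trans with (8 * n * L / r); auto.
    apply Rdiv_lt_0_compat; nra. }
  assert (HK1 : (1 <= K)%nat). { destruct K; [simpl in HK0; lra| lia]. }
  assert (HKr : 8 * n * L < r * INR K).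
  { apply Rmult_lt_compat_l with (r := r) in HK; auto.
    replace (r * (8 * n * L / r)) with (8 * n * L) in HK by (field; lra). lra. }
  set (M := (K * K + 1)%nat). set (N := (K * M)%nat).
  assert (HM : 0 < INR M) by (apply lt_0_INR; unfold M; lia).
  assert (HN : 0 < INR N) by (apply lt_0_INR; unfold N, M; nia).
  assert (HNe : INR N = INR K * INR M) by (unfold N; apply mult_INR).
  set (h := r / INR M). set (rho := h / 4). set (e := 2 * n / INR N).
  assert (Hh : 0 < h) by (unfold h; apply Rdiv_lt_0_compat; lra).
  assert (He : 0 < e) by (unfold e; apply Rdiv_lt_0_compat; lra).
  assert (Hkey : 2 * L * e < h / 2).
  { unfold e, h. rewrite HNe. apply Rmult_lt_reg_r with (r := 2 * INR K * INR M); [nra|].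
    field_simplify; try nra. }
  set (g := fun q (i : nat) => q - r / 2 + INR i * h).
  assert (Hg : forall q i, (i < M)%nat -> Rabs (g q i - q) + rho <= r).
  { intros q i Hi. unfold g, rho.
    assert (0 <= INR i) by apply pos_INR.
    assert (INR i + 1 <= INR M) by (rewrite <- S_INR; apply le_INR; lia).
    assert (HMh : INR M * h = r) by (unfold h; field; lra).
    assert (INR i * h + h <= r) by nra.
    assert (0 <= INR i * h) by (apply Rmult_le_pos; lra).
    unfold Rabs; destruct Rcase_abs; lra. }
  assert (Hcoord : forall q (i i' : nat) a b, Rabs (a - g q i) <= rho -> Rabs (b - g q i') <= rho ->
     Rabs (a - b) <= 2 * L * e -> i = i').
  { intros q i i' a b Ha Hb Hab. apply INR_close.
    assert (Rabs (g q i - g q i') < h).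
    { replace (g q i - g q i') with ((g q i - a) + (a - b) + (b - g q i')) by ring.
      eapply Rle_lt_trans; [apply Rabs_triang|].
      eapply Rle_lt_trans; [apply Rplus_le_compat_r, Rabs_triang|].
      rewrite <- (Rabs_Ropp (g q i - a)). replace (- (g q i - a)) with (a - g q i) by ring.
      unfold rho in *. lra. }
    unfold g in H. replace (q - r / 2 + INR i * h - (q - r / 2 + INR i' * h)) with ((INR i - INR i') * h) in H by ring.
    rewrite Rabs_mult, (Rabs_right h) in H by lra.
    apply Rmult_lt_reg_r with h; lra. }
  apply NNPP; intro Hno.
  assert (Hall : forall x : nat * nat * nat, exists st : R * R,
     match x with (i, j, k) => ((i < M)%nat -> (j < M)%nat -> (k < M)%nat ->
       (Rabs (fst st) <= n /\ Rabs (snd st) <= n /\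
       Rabs (p1 (fst st) (snd st) - g q1 i) <= rho /\
       Rabs (p2 (fst st) (snd st) - g q2 j) <= rho /\
       Rabs (p3 (fst st) (snd st) - g q3 k) <= rho)) end).
  { intros [[i j] k]. destruct (classic (i < M /\ j < M /\ k < M)%nat) as [Hc|Hc].
    - apply NNPP; intro Hne. apply Hno. exists (g q1 i), (g q2 j), (g q3 k), rho.
      split; [unfold rho; lra|].
      split; [apply Hg; tauto|]. split; [apply Hg; tauto|]. split; [apply Hg; tauto|].
      intros s t Hs Ht Hcl. apply Hne. exists (s, t). intros; simpl; tauto.
    - exists (0, 0). intros; exfalso; tauto. }
  set (W := fun x => proj1_sig (constructive_indefinite_description _ (Hall x))).
  assert (HW : forall i j k, (i < M)%nat -> (j < M)%nat -> (k < M)%nat ->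
       Rabs (fst (W (i, j, k))) <= n /\ Rabs (snd (W (i, j, k))) <= n /\
       Rabs (p1 (fst (W (i, j, k))) (snd (W (i, j, k))) - g q1 i) <= rho /\
       Rabs (p2 (fst (W (i, j, k))) (snd (W (i, j, k))) - g q2 j) <= rho /\
       Rabs (p3 (fst (W (i, j, k))) (snd (W (i, j, k))) - g q3 k) <= rho).
  { intros i j k Hi Hj Hk. exact (proj2_sig (constructive_indefinite_description _ (Hall (i, j, k))) Hi Hj Hk). }
  assert (Hc : forall u : R, exists a : nat, 0 <= u <= INR N -> (a < N)%nat /\ INR a <= u <= INR a + 1).
  { intro u. destruct (classic (0 <= u <= INR N)) as [H|H].
    - destruct (cell_ex N ltac:(unfold N, M; nia) u H) as (a & Ha). exists a; auto.
    - exists 0%nat; tauto. }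
  set (idx := fun u => proj1_sig (constructive_indefinite_description _ (Hc u))).
  assert (Hidx : forall u, 0 <= u <= INR N -> (idx u < N)%nat /\ INR (idx u) <= u <= INR (idx u) + 1).
  { intro u. exact (proj2_sig (constructive_indefinite_description _ (Hc u))). }
  assert (Hu : forall s, Rabs s <= n -> 0 <= (s + n) / e <= INR N).
  { intros s Hs. assert (E : (s + n) / e = (s + n) * / (2 * n) * INR N) by (unfold e; field; lra).
    rewrite E. assert (-n <= s <= n) by (unfold Rabs in Hs; destruct Rcase_abs; lra).
    assert (Hi : 0 < / (2 * n)) by (apply Rinv_0_lt_compat; lra).
    assert (Hi2 : 2 * n * / (2 * n) = 1) by (field; lra).
    split.
    - apply Rmult_le_pos; [|lra]. apply Rmult_le_pos; lra.
    - assert ((s + n) * / (2 * n) <= 1) by nra. nra. }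
  assert (Hclose : forall s s', Rabs s <= n -> Rabs s' <= n -> idx ((s + n) / e) = idx ((s' + n) / e) ->
      Rabs (s - s') <= e).
  { intros s s' Hs Hs' E. destruct (Hidx _ (Hu s Hs)) as [_ A]. destruct (Hidx _ (Hu s' Hs')) as [_ B].
    rewrite E in A.
    replace (s - s') with (((s + n) / e - (s' + n) / e) * e) by (field; lra).
    rewrite Rabs_mult, (Rabs_right e) by lra.
    assert (Rabs ((s + n) / e - (s' + n) / e) <= 1) by (unfold Rabs; destruct Rcase_abs; lra).
    nra. }
  set (f := fun x => (idx ((fst (W x) + n) / e), idx ((snd (W x) + n) / e))).
  assert (HP : (M * M * M <= N * N)%nat).
  { apply (pigeon M N f).
    - intros i j k Hi Hj Hk. destruct (HW i j k Hi Hj Hk) as (A & B & _).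
      simpl. split; apply Hidx, Hu; auto.
    - intros i j k i' j' k' Hi Hj Hk Hi' Hj' Hk' E. unfold f in E. injection E as E1 E2.
      destruct (HW i j k Hi Hj Hk) as (A & B & C1 & C2 & C3).
      destruct (HW i' j' k' Hi' Hj' Hk') as (A' & B' & C1' & C2' & C3').
      pose proof (Hclose _ _ A A' E1) as D1. pose proof (Hclose _ _ B B' E2) as D2.
      assert (Hb : forall p, boxlip p n L -> Rabs (p (fst (W (i, j, k))) (snd (W (i, j, k))) -
                 p (fst (W (i', j', k'))) (snd (W (i', j', k')))) <= 2 * L * e).
      { intros p Hp. eapply Rle_trans; [apply Hp; auto|]. nra. }
      split; [|split].
      + eapply Hcoord; [exact C1|exact C1'|apply Hb; auto].
      + eapply Hcoord; [exact C2|exact C2'|apply Hb; auto].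
      + eapply Hcoord; [exact C3|exact C3'|apply Hb; auto]. }
  unfold N, M in HP. nia.
Qed.

Lemma nested_pt (a b : nat -> R) : (forall k, a k <= a (S k)) -> (forall k, b (S k) <= b k) ->
  (forall k, a k <= b k) -> exists x, forall k, a k <= x <= b k.
Proof.
  intros Ha Hb Hab.
  assert (Ham : forall k m, (k <= m)%nat -> a k <= a m).
  { intros k m H; induction H; [lra|]. specialize (Ha m); lra. }
  assert (Hbm : forall k m, (k <= m)%nat -> b m <= b k).
  { intros k m H; induction H; [lra|]. specialize (Hb m); lra. }
  assert (Hall : forall k m, a k <= b m).
  { intros k m. destruct (Nat.le_ge_cases k m) as [H|H].
    - specialize (Ham _ _ H). specialize (Hab m). lra.
    - specialize (Hbm _ _ H). specialize (Hab k). lra. }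
  set (E := fun x => exists k, x = a k).
  destruct (completeness E) as [x [Hub Hlub]].
  - exists (b 0%nat). intros y [k ->]. apply Hall.
  - exists (a 0%nat). exists 0%nat. auto.
  - exists x. intro k. split.
    + apply Hub. exists k; auto.
    + apply Hlub. intros y [m ->]. apply Hall.
Qed.

Record cube := mkc { c1 : R; c2 : R; c3 : R; rad : R }.

Lemma avoid (p1 p2 p3 : R -> R -> R) :
  (forall n, 0 < n -> exists L, 0 < L /\ boxlip p1 n L /\ boxlip p2 n L /\ boxlip p3 n L) ->
  forall r, 0 < r -> exists x1 x2 x3, Rabs x1 < r /\ Rabs x2 < r /\ Rabs x3 < r /\
    forall s t, ~ (p1 s t = x1 /\ p2 s t = x2 /\ p3 s t = x3).
Proof.
  intros HL r Hr.
  assert (St : forall (k : nat) (c : cube), exists c' : cube, 0 < rad c ->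
    0 < rad c' /\ Rabs (c1 c' - c1 c) + rad c' <= rad c /\ Rabs (c2 c' - c2 c) + rad c' <= rad c /\
    Rabs (c3 c' - c3 c) + rad c' <= rad c /\
    forall s t, Rabs s <= INR k + 1 -> Rabs t <= INR k + 1 ->
      ~ (Rabs (p1 s t - c1 c') <= rad c' /\ Rabs (p2 s t - c2 c') <= rad c' /\ Rabs (p3 s t - c3 c') <= rad c')).
  { intros k c. destruct (classic (0 < rad c)) as [H|H].
    - assert (Hn : 0 < INR k + 1) by (pose proof (pos_INR k); lra).
      destruct (HL _ Hn) as (L & HL0 & A1 & A2 & A3).
      destruct (step p1 p2 p3 (INR k + 1) L Hn HL0 A1 A2 A3 (c1 c) (c2 c) (c3 c) (rad c) H)
        as (x1 & x2 & x3 & rho & H1 & H2 & H3 & H4 & H5).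
      exists (mkc x1 x2 x3 rho). intros _. simpl. auto.
    - exists c. tauto. }
  set (F := fun k c => proj1_sig (constructive_indefinite_description _ (St k c))).
  assert (HF : forall k c, 0 < rad c -> _) by (intros k c; exact (proj2_sig (constructive_indefinite_description _ (St k c)))).
  set (sq := fix sq (k : nat) : cube := match k with O => mkc 0 0 0 (r / 2) | S k => F k (sq k) end).
  assert (Hpos : forall k, 0 < rad (sq k)).
  { induction k; simpl; [lra|]. apply (HF k (sq k) IHk). }
  assert (HS : forall k, Rabs (c1 (sq (S k)) - c1 (sq k)) + rad (sq (S k)) <= rad (sq k) /\
    Rabs (c2 (sq (S k)) - c2 (sq k)) + rad (sq (S k)) <= rad (sq k) /\
    Rabs (c3 (sq (S k)) - c3 (sq k)) + rad (sq (S k)) <= rad (sq k) /\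
    forall s t, Rabs s <= INR k + 1 -> Rabs t <= INR k + 1 ->
      ~ (Rabs (p1 s t - c1 (sq (S k))) <= rad (sq (S k)) /\ Rabs (p2 s t - c2 (sq (S k))) <= rad (sq (S k)) /\
         Rabs (p3 s t - c3 (sq (S k))) <= rad (sq (S k)))).
  { intro k. destruct (HF k (sq k) (Hpos k)) as (_ & A). exact A. }
  assert (Hcoord : forall ci : cube -> R, (forall k, Rabs (ci (sq (S k)) - ci (sq k)) + rad (sq (S k)) <= rad (sq k)) ->
     exists x, forall k, Rabs (x - ci (sq k)) <= rad (sq k)).
  { intros ci Hci. destruct (nested_pt (fun k => ci (sq k) - rad (sq k)) (fun k => ci (sq k) + rad (sq k))) as [x Hx].
    - intro k. specialize (Hci k). unfold Rabs in Hci; destruct Rcase_abs in Hci; lra.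
    - intro k. specialize (Hci k). unfold Rabs in Hci; destruct Rcase_abs in Hci; lra.
    - intro k. specialize (Hpos k). lra.
    - exists x. intro k. specialize (Hx k). unfold Rabs; destruct Rcase_abs; lra. }
  destruct (Hcoord c1 (fun k => proj1 (HS k))) as [x1 X1].
  destruct (Hcoord c2 (fun k => proj1 (proj2 (HS k)))) as [x2 X2].
  destruct (Hcoord c3 (fun k => proj1 (proj2 (proj2 (HS k))))) as [x3 X3].
  exists x1, x2, x3.
  assert (Hz : forall x, Rabs (x - 0) <= r / 2 -> Rabs x < r) by (intros x Hx; rewrite Rminus_0_r in Hx; lra).
  split; [apply Hz, (X1 0%nat)|]. split; [apply Hz, (X2 0%nat)|]. split; [apply Hz, (X3 0%nat)|].
  intros s t (E1 & E2 & E3).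
  destruct (INR_unbounded (Rabs s + Rabs t)) as [k Hk].
  pose proof (Rabs_pos s); pose proof (Rabs_pos t).
  destruct (HS k) as (_ & _ & _ & Hav). apply (Hav s t); try lra.
  rewrite E1, E2, E3. split; [|split]; [apply X1|apply X2|apply X3].
Qed.

Definition pert (x : R) (l : list R) : list R :=
  match l with c0 :: c1 :: r => c0 :: (c1 + x) :: r | _ => l end.

Lemma pert_length x l : length (pert x l) = length l.
Proof. destruct l as [|? [|? ?]]; reflexivity. Qed.

Lemma pert_dd x l s t : (2 <= length l)%nat -> dd (pert x l) s t = dd l s t + x.
Proof. intro H. destruct l as [|c0 [|c1 r]]; simpl in H; try lia. simpl. ring. Qed.

Lemma sqdist_refl l : sqdist l l = 0.
Proof. induction l; simpl; [reflexivity|]. rewrite IHl. ring. Qed.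

Lemma pert_sqdist x l : (2 <= length l)%nat -> sqdist l (pert x l) = x ^ 2.
Proof. intro H. destruct l as [|c0 [|c1 r]]; simpl in H; try lia. simpl. rewrite sqdist_refl. ring. Qed.

Lemma pert_nth x l k : nth k l 0 <> 0 -> Rabs x < Rabs (nth k l 0) -> nth k (pert x l) 0 <> 0.
Proof.
  intros H1 H2. destruct l as [|c0 [|c1 r]]; auto. destruct k as [|[|k]]; simpl in *; auto.
  intro E. replace x with (- c1) in H2 by lra. rewrite Rabs_Ropp in H2. lra.
Qed.

Lemma knot_crit a b c : (forall s t, ~ (dd a s t = 0 /\ dd b s t = 0 /\ dd c s t = 0)) ->
  is_polynomial_knot a b c.
Proof.
  intro H. split.
  - intros s t E. unfold pmap in E. injection E as E1 E2 E3.
    destruct (Req_dec s t) as [|Hne]; auto. exfalso. apply (H s t).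
    assert (Hz : forall l, peval l s = peval l t -> dd l s t = 0).
    { intros l El. pose proof (dd_diff l s t) as D. rewrite El, Rminus_diag in D.
      destruct (Rmult_integral _ _ D) as [|D']; auto. exfalso. apply Hne. lra. }
    auto.
  - intros t (D1 & D2 & D3). apply (H t t).
    split; [|split]; eapply uniqueness_limite; [apply dd_deriv|exact D1|apply dd_deriv|exact D2|apply dd_deriv|exact D3].
Qed.

Theorem mainTheorem12 :
  forall d : nat, (2 <= d)%nat ->
  forall a b c : list R, in_C d a b c ->
  forall eps : R, 0 < eps ->
  exists a' b' c' : list R, in_Q d a' b' c' /\ dist3 a b c a' b' c' < eps.
Proof.
  intros d Hd a b c HC eps Heps.
  destruct HC as [[La [Lb Lc]] [Na [Nb Nc]]].
  destruct (Nat.eq_dec d 2) as [->|Hd3].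
  - exists a, b, c. split.
    + split; [split; [split; auto| auto]|].
      apply knot_crit. intros s t (_ & B & _).
      destruct b as [|b0 [|b1 [|? ?]]]; simpl in Lb; try lia.
      simpl in Nb. simpl in B. lra.
    + unfold dist3. rewrite !sqdist_refl. replace (0 + 0 + 0) with 0 by ring. rewrite sqrt_0. lra.
  - assert (HLip : forall n, 0 < n -> exists L, 0 < L /\ boxlip (dd a) n L /\ boxlip (dd b) n L /\ boxlip (dd c) n L).
    { intros n Hn. destruct (dd_lip a n ltac:(lra)) as (L1 & H1 & A1).
      destruct (dd_lip b n ltac:(lra)) as (L2 & H2 & A2).
      destruct (dd_lip c n ltac:(lra)) as (L3 & H3 & A3).
      exists (L1 + L2 + L3 + 1). 
      assert (Hmono : forall p L', (forall s t s' t', Rabs s <= n -> Rabs t <= n -> Rabs s' <= n -> Rabs t' <= n ->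
          Rabs (p s t - p s' t') <= L' * (Rabs (s - s') + Rabs (t - t'))) -> L' <= L1 + L2 + L3 + 1 ->
          boxlip p n (L1 + L2 + L3 + 1)).
      { intros p L' Hp HL' s t s' t' ? ? ? ?. eapply Rle_trans; [apply Hp; auto|].
        apply Rmult_le_compat_r; auto. pose proof (Rabs_pos (s - s')); pose proof (Rabs_pos (t - t')); lra. }
      split; [lra|]. split; [|split]; eapply Hmono; eauto; lra. }
    set (r := Rmin (eps / 2) (Rmin (Rabs (nth (d - 2) a 0)) (Rmin (Rabs (nth (d - 1) b 0)) (Rabs (nth d c 0))))).
    assert (Hr : 0 < r).
    { unfold r. repeat apply Rmin_glb_lt; try lra; apply Rabs_pos_lt; auto. }
    destruct (avoid (dd a) (dd b) (dd c) HLip r Hr) as (x1 & x2 & x3 & H1 & H2 & H3 & Hav).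
    assert (R1 : r <= eps / 2) by apply Rmin_l.
    assert (R2 : r <= Rabs (nth (d - 2) a 0)) by (unfold r; eapply Rle_trans; [apply Rmin_r|apply Rmin_l]).
    assert (R3 : r <= Rabs (nth (d - 1) b 0)) by (unfold r; eapply Rle_trans; [apply Rmin_r|];
      eapply Rle_trans; [apply Rmin_r|apply Rmin_l]).
    assert (R4 : r <= Rabs (nth d c 0)) by (unfold r; eapply Rle_trans; [apply Rmin_r|];
      eapply Rle_trans; [apply Rmin_r|apply Rmin_r]).
    assert (Ga : (2 <= length a)%nat) by lia.
    assert (Gb : (2 <= length b)%nat) by lia.
    assert (Gc : (2 <= length c)%nat) by lia.
    exists (pert (- x1) a), (pert (- x2) b), (pert (- x3) c). split.
    + split.
      * split; [split; [|split]; rewrite pert_length; auto|].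
        split; [|split]; apply pert_nth; auto; rewrite Rabs_Ropp; lra.
      * apply knot_crit. intros s t (E1 & E2 & E3). apply (Hav s t).
        rewrite pert_dd in E1, E2, E3 by auto. lra.
    + unfold dist3. rewrite !pert_sqdist by auto.
      rewrite <- (sqrt_pow2 eps) by lra. apply sqrt_lt_1; try nra.
      rewrite <- !(pow2_abs (- _)), !Rabs_Ropp.
      pose proof (Rabs_pos x1); pose proof (Rabs_pos x2); pose proof (Rabs_pos x3).
      nra.
Qed.
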